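(* Let $q\in\mathbb{N}$, let $\psi$ be a primitive Dirichlet character mod $q_0$ with $q_0\mid q$, and let $f$ be a $q$-periodic arithmetical function with $f\in E_{q,\psi}$. Then $$f(n)=\sum_{d\mid\frac q{q_0}}g(d)\,\tau\big(n,\overline{\psi_{q/d}}\big),\qquad n=1,2,\dots,$$ where $g=\mathcal{T}f$.
   Context: A Dirichlet character mod $m$ is a completely multiplicative $m$-periodic function with $\chi(n)\ne0$ iff $\gcd(n,m)=1$; primitive means not induced (in the sense $\chi=\psi'\chi_m$, $\chi_m$ principal) by a character of modulus a proper divisor. $\psi_{q/d}=\psi\chi_{q/d}$ is the character mod $\frac qd$ induced by $\psi$. For a character $\chi$ mod $m$, the Gauss sum is $\tau(n,\chi)=\sum_{k=1}^m\chi(k)e^{2\pi ikn/m}$. For $d\mid q$ and a character $\chi$ mod $\frac qd$, $\xi_\chi(n)=\chi(\frac nd)$ if $d\mid n$, $0$ otherwise; $E_{q,\psi}$ is the span of $\{\xi_{\psi_{q/d}}:d\mid\frac q{q_0}\}$. For $q$-periodic $f$, $(\mathcal{T}f)(m)=\frac1q\sum_{n=1}^qe^{-2\pi imn/q}f(n)$. *)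

(* Defs.v *)
From mathcomp Require Import all_boot all_algebra.
From mathcomp Require Import complex.
From mathcomp Require Import reals trigo.
Set Implicit Arguments.
Unset Strict Implicit.
Unset Printing Implicit Defensive.
Import GRing.Theory Num.Theory.
Local Open Scope ring_scope.
Local Open Scope complex_scope.

Section Defs.
Variable R : realType.
Local Notation C := R[i].

Definition expi2pi (x : R) : C := cos (2 * pi * x) +i* sin (2 * pi * x).

Definition ekm (k n m : nat) : C := expi2pi ((k * n)%:R / m%:R).
Definition ekm_neg (k n m : nat) : C := expi2pi (- ((k * n)%:R / m%:R)).

Definition dirichlet_char (m : nat) (chi : nat -> C) : Prop :=
  [/\ chi 1%N = 1,
      (forall a b : nat, chi (a * b)%N = chi a * chi b),
      (forall n : nat, chi (n + m)%N = chi n) &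
      (forall n : nat, chi n != 0 <-> coprime n m)].

Definition principal_char (m : nat) : nat -> C :=
  fun n => if coprime n m then 1 else 0.

Definition induced_by (m : nat) (chi : nat -> C) (m' : nat) (psi' : nat -> C) :=
  dirichlet_char m' psi' /\ forall n, chi n = psi' n * principal_char m n.

Definition primitive_char (m : nat) (chi : nat -> C) : Prop :=
  dirichlet_char m chi /\
  forall m' (psi' : nat -> C), (m' %| m)%N -> (m' < m)%N ->
    ~ induced_by m chi m' psi'.

(* psi_{q/d} = psi * chi_{q/d}, the character mod q/d induced by psi *)
Definition induced_char (psi : nat -> C) (m : nat) : nat -> C :=
  fun n => psi n * principal_char m n.

Definition gauss_sum (m : nat) (n : nat) (chi : nat -> C) : C :=
  \sum_(1 <= k < m.+1) chi k * ekm k n m.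

Definition conj_fun (chi : nat -> C) : nat -> C := fun n => (chi n)^*.

Definition xi (d : nat) (chi : nat -> C) : nat -> C :=
  fun n => if (d %| n)%N then chi (n %/ d)%N else 0.

Definition in_E (q q0 : nat) (psi : nat -> C) (f : nat -> C) : Prop :=
  exists c : nat -> C, forall n : nat,
    f n = \sum_(d <- divisors (q %/ q0)) c d * xi d (induced_char psi (q %/ d)) n.

Definition periodic_nat (q : nat) (f : nat -> C) : Prop :=
  forall n : nat, f (n + q)%N = f n.

Definition Tq (q : nat) (f : nat -> C) (m : nat) : C :=
  (q%:R)^-1 * \sum_(1 <= n < q.+1) ekm_neg m n q * f n.

End Defs.

(* Main.v *)
Require Import Defs.
From mathcomp Require Import all_boot all_order all_algebra.
From mathcomp Require Import complex.
From mathcomp Require Import reals trigo.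
From mathcomp Require Import cyclic zify ring lra.
Import Order.TTheory GRing.Theory Num.Theory.
Set Implicit Arguments. Unset Strict Implicit. Unset Printing Implicit Defensive.

Section B.

Lemma per_add (T : Type) (F : nat -> T) m :
  (forall n, F (n + m)%N = F n) -> forall n k, F (n + k * m)%N = F n.
Proof.
move=> H n; elim=> [|k IH]; first by rewrite mul0n addn0.
by rewrite mulSn addnCA addnC H IH.
Qed.

Lemma per_mod (T : Type) (F : nat -> T) m :
  (forall n, F (n + m)%N = F n) -> forall n, F (n %% m) = F n.
Proof.
by move=> H n; rewrite {2}(divn_eq n m) addnC (per_add H).
Qed.

Lemma per_eqmod (T : Type) (F : nat -> T) m :
  (forall n, F (n + m)%N = F n) -> forall a b, a %% m = b %% m -> F a = F b.
Proof. by move=> H a b e; rewrite -(per_mod H a) e (per_mod H). Qed.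

Lemma sum_shift1 (V : zmodType) (F : nat -> V) m :
  (forall n, F (n + m)%N = F n) ->
  (\sum_(1 <= i < m.+1) F i = \sum_(i < m) F i)%R.
Proof.
move=> H; rewrite -(big_mkord xpredT F).
have E : (\sum_(0 <= i < m.+1) F i = F 0 + \sum_(1 <= i < m.+1) F i)%R by rewrite big_ltn.
have E2 : (\sum_(0 <= i < m.+1) F i = \sum_(0 <= i < m) F i + F m)%R by rewrite big_nat_recr.
have Fm : F m = F 0 by rewrite -(add0n m) H.
rewrite E2 Fm addrC in E.
by apply: (addrI (F 0)); rewrite -E.
Qed.

Lemma sum_mult (V : nmodType) (G : nat -> V) d r : 0 < d ->
  (\sum_(1 <= n < (d * r).+1) (if (d %| n)%N then G n else 0) =
   \sum_(1 <= k < r.+1) G (d * k)%N)%R.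
Proof.
move=> d0; elim: r => [|r IH].
  by rewrite muln0 !big_geq.
rewrite (@big_cat_nat _ _ _ (d * r).+1) //=; last by nia.
rewrite IH [in RHS]big_nat_recr //=; congr (_ + _)%R.
have e : (d * r.+1 = d * r + d)%N by rewrite mulnS addnC.
rewrite e big_nat_recr /=; last by nia.
have -> : (d %| d * r + d)%N by rewrite -e dvdn_mulr.
rewrite big_nat_cond big1 ?add0r // => n /andP[/andP[lo hi] _].
case: ifP => // /dvdnP [k ek]; exfalso.
move: lo hi; rewrite ek -e (mulnC k) => lo hi.
have l1 : r < k by rewrite -(ltn_pmul2l d0).
have l2 : k < r.+1 by rewrite -(ltn_pmul2l d0).
lia.
Qed.

Definition liftT k B := \prod_(p <- primes B | ~~ (p %| k)) p.

Lemma lift_coprime k A B : coprime k A -> 0 < B ->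
  coprime (k + liftT k B * A) B.
Proof.
move=> cokA B0.
rewrite /liftT; set T := \prod_(p <- primes B | ~~ (p %| k)) p.
rewrite /coprime; apply/eqP.
set X := k + T * A.
have g0 : 0 < gcdn X B by rewrite gcdn_gt0 B0 orbT.
apply/eqP; apply/negPn/negP => ng1.
have g1 : 1 < gcdn X B by rewrite ltn_neqAle eq_sym ng1.
have [p pp pg] := pdivP g1.
have pX : p %| X := dvdn_trans pg (dvdn_gcdl _ _).
have pB : p %| B := dvdn_trans pg (dvdn_gcdr _ _).
have pbig : ~~ (p %| k) -> p %| T.
  move=> npk; have pin : p \in primes B by rewrite mem_primes pp B0.
  rewrite /T big_mkcond (bigD1_seq p) ?primes_uniq //= npk.
  by apply: dvdn_mulr.
case pk: (p %| k).
  have npA : ~~ (p %| A).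
    apply/negP => pA.
    have : p %| gcdn k A by rewrite dvdn_gcd pk pA.
    by rewrite (eqP cokA) Euclid_dvd1.
  move: pX; rewrite /X dvdn_addr // Euclid_dvdM // (negbTE npA) orbF.
  rewrite Euclid_dvd_prod // big_has_cond => /hasP [i iB /andP [nik pi]].
  move: iB; rewrite mem_primes => /and3P [pri _ _].
  move: pi; rewrite dvdn_prime2 // => /eqP ei.
  by rewrite -ei pk in nik.
have pTA : p %| T * A by apply: dvdn_mulr; apply: pbig; rewrite pk.
by move: pX; rewrite /X dvdn_addl // pk.
Qed.

End B.

Local Open Scope ring_scope.

Section A.
Variable R : realType.
Local Notation C := R[i].

Lemma e_add (x y : R) : expi2pi (x + y) = expi2pi x * expi2pi y.
Proof.
rewrite /expi2pi mulrDr cosD sinD.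
by apply/eqP; rewrite eq_complex /= !eqxx /= addrC eqxx.
Qed.

Lemma e0 : expi2pi (0 : R) = 1.
Proof. by rewrite /expi2pi mulr0 cos0 sin0. Qed.

Lemma e1 : expi2pi (1 : R) = 1.
Proof. by rewrite /expi2pi mulr1 mulr_natl cos2pi sin2pi. Qed.

Lemma e_nat (n : nat) : expi2pi (n%:R : R) = 1.
Proof.
elim: n => [|n IH]; first by rewrite e0.
by rewrite -addn1 natrD e_add IH e1 mulr1.
Qed.

Lemma e_opp (x : R) : expi2pi (- x) * expi2pi x = 1.
Proof. by rewrite -e_add addNr e0. Qed.

Lemma e_natN (n : nat) : expi2pi (- (n%:R : R)) = 1.
Proof. by have := e_opp n%:R; rewrite e_nat mulr1. Qed.

Lemma e_mulN (n : nat) (x : R) : expi2pi (n%:R * x) = expi2pi x ^+ n.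
Proof.
elim: n => [|n IH]; first by rewrite mul0r e0 expr0.
by rewrite -addn1 natrD mulrDl mul1r e_add IH exprD expr1.
Qed.

Lemma cos_eq1_0 (y : R) : 0 <= y <= pi -> cos y = 1 -> y = 0.
Proof.
move=> Hy Hc; apply: (@cos_inj R y 0).
- by rewrite in_itv /=.
- by rewrite in_itv /= lexx pi_ge0.
- by rewrite Hc cos0.
Qed.

Lemma e_ne1 (t : R) : 0 < t < 1 -> expi2pi t != 1.
Proof.
move=> /andP[t0 t1]; apply/negP => /eqP/eqP.
rewrite /expi2pi eq_complex /= => /andP[/eqP Hc _].
have pi0 := pi_gt0 R.
have [le|lt] := lerP (2 * pi * t) pi.
  have : 0 <= 2 * pi * t <= pi by rewrite le andbT !mulr_ge0 // ?ltW.
  move/cos_eq1_0/(_ Hc) => H0.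
  have : 0 < 2 * pi * t by rewrite !mulr_gt0.
  by rewrite H0 ltxx.
have H2 : cos (2 * pi - 2 * pi * t) = 1.
  have c2 : cos (2 * pi) = 1 :> R by rewrite mulr_natl cos2pi.
  have s2 : sin (2 * pi) = 0 :> R by rewrite mulr_natl sin2pi.
  by rewrite cosB c2 s2 mul0r addr0 mul1r.
have : 0 <= 2 * pi - 2 * pi * t <= pi.
  apply/andP; split; first by rewrite subr_ge0 ler_piMr // ?mulr_ge0 // ltW.
  have := ltW lt; lra.
move/cos_eq1_0/(_ H2) => /eqP; rewrite subr_eq0 => /eqP H.
have : 2 * pi * t < 2 * pi by rewrite gtr_pMr ?mulr_gt0.
by rewrite -H ltxx.
Qed.

Lemma geo (q x : nat) : (0 < q)%N ->
  \sum_(m < q) expi2pi (((m * x)%:R : R) / q%:R) = if (q %| x)%N then q%:R else 0.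
Proof.
move=> q0.
have qn0 : (q%:R : R) != 0 by rewrite pnatr_eq0 -lt0n.
set z := expi2pi ((x%:R : R) / q%:R).
have Ez : forall m : nat, expi2pi (((m * x)%:R : R) / q%:R) = z ^+ m.
  by move=> m; rewrite natrM -mulrA e_mulN.
under eq_bigr => m _ do rewrite Ez.
case: ifP => [dv|ndv].
  have -> : z = 1 by rewrite /z; case/dvdnP: dv => k ->; rewrite natrM mulfK // e_nat.
  by rewrite (eq_bigr (fun _ => 1)) ?sumr_const ?card_ord // => i _; rewrite expr1n.
have zq : z ^+ q = 1 by rewrite -e_mulN mulrC divfK // e_nat.
have zn1 : z != 1.
  rewrite /z {1}(divn_eq x q) natrD natrM mulrDl mulfK // e_add e_nat mul1r.
  apply: e_ne1; apply/andP; split.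
    rewrite divr_gt0 // ?ltr0n // lt0n; apply: contraFN ndv => /eqP h.
    by rewrite /dvdn h.
  by rewrite ltr_pdivrMr ?ltr0n // mul1r ltr_nat ltn_pmod.
have := subrX1 z q; rewrite zq subrr => /esym/eqP; rewrite mulf_eq0 subr_eq0.
by rewrite (negbTE zn1) /= => /eqP.
Qed.

End A.

Section C.
Variables (R : realType) (q0 : nat) (psi : nat -> R[i]).

Lemma psi_per (Hpsi : dirichlet_char q0 psi) n : psi (n + q0)%N = psi n.
Proof. by case: Hpsi. Qed.

Lemma psi_eqmod (Hpsi : dirichlet_char q0 psi) a b :
  (a %% q0 = b %% q0)%N -> psi a = psi b.
Proof. move=> e; exact: (per_eqmod (psi_per Hpsi) e). Qed.

Lemma psi_mul (Hpsi : dirichlet_char q0 psi) a b : psi (a * b)%N = psi a * psi b.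
Proof. by case: Hpsi. Qed.

Lemma psi1 (Hpsi : dirichlet_char q0 psi) : psi 1%N = 1.
Proof. by case: Hpsi. Qed.

Lemma psi_exp (Hpsi : dirichlet_char q0 psi) u k : psi (u ^ k)%N = psi u ^+ k.
Proof.
elim: k => [|k IH]; first by rewrite expn0 expr0 psi1.
by rewrite expnS psi_mul // IH exprS.
Qed.

Lemma psi0 (Hpsi : dirichlet_char q0 psi) n : ~~ coprime n q0 -> psi n = 0.
Proof.
case: Hpsi => _ _ _ H nc; apply/eqP; apply/negPn/negP => /H.
by rewrite (negbTE nc).
Qed.

Lemma psi_nz (Hpsi : dirichlet_char q0 psi) n : coprime n q0 -> psi n != 0.
Proof. by case: Hpsi => _ _ _ H /H. Qed.

Lemma psi_unit (Hpsi : dirichlet_char q0 psi) u : (0 < q0)%N -> coprime u q0 ->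
  conjc (psi u) * psi u = 1.
Proof.
move=> q00 cu.
have tp : (0 < totient q0)%N by rewrite totient_gt0.
have e1 : psi u ^+ totient q0 = 1.
  by rewrite -psi_exp // -(psi1 Hpsi); apply: psi_eqmod => //; apply: Euler_exp_totient.
have n1 : `|psi u| = 1.
  apply/eqP; rewrite -(pexpr_eq1 tp) ?normr_ge0 // -normrX e1 normr1 //.
change (Num.conj (psi u) * psi u = 1).
by rewrite mulrC -normCK n1 expr1n.
Qed.

End C.

Definition Lft (q0 q1 n : nat) := (n + liftT n q0 * q1)%N.

Section D.
Variables (R : realType) (q0 : nat) (psi : nat -> R[i]).

Lemma prim_contra (Hp : primitive_char q0 psi) q1 :
  (q1 %| q0)%N -> (q1 < q0)%N ->
  (forall a, coprime a q0 -> (a %% q1 = 1 %% q1)%N -> psi a = 1) -> False.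
Proof.
case: Hp => Hpsi Hnot dq lq Ha.
have q0p : (0 < q0)%N by lia.
have q1p : (0 < q1)%N.
  rewrite lt0n; apply/negP => /eqP e; move: dq; rewrite e dvd0n => /eqP e0; lia.
pose L := Lft q0 q1.
have cL : forall n, coprime n q1 -> coprime (L n) q0.
  by move=> n c; apply: lift_coprime.
have mL : forall n, (L n %% q1 = n %% q1)%N.
  by move=> n; rewrite /L /Lft addnC modnMDl.
have K : forall x y, coprime x q0 -> coprime y q0 -> (x %% q1 = y %% q1)%N ->
    psi x = psi y.
  move=> x y cx cy exy.
  have tp : (0 < totient q0)%N by rewrite totient_gt0.
  set y' := (y ^ (totient q0).-1)%N.
  have yy : ((y * y') %% q0 = 1 %% q0)%N.
    by rewrite /y' -expnS prednK //; apply: Euler_exp_totient.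
  have ca : coprime (x * y') q0 by rewrite coprimeMl cx coprimeXl.
  have ma : ((x * y') %% q1 = 1 %% q1)%N.
    rewrite -modnMml exy modnMml -(modn_dvdm (y * y') dq) yy modn_dvdm //.
  have p1 := Ha _ ca ma.
  have pyy : psi (y * y')%N = 1.
    by rewrite -(psi1 Hpsi); apply: (psi_eqmod Hpsi); rewrite yy.
  rewrite -[psi x]mulr1 -pyy (psi_mul Hpsi y y') mulrA (mulrC (psi x)) -mulrA.
  by rewrite -(psi_mul Hpsi x y') p1 mulr1.
pose psi' n := if coprime n q1 then psi (L n) else 0.
apply: (Hnot q1 psi' dq lq); split; [split|].
- rewrite /psi' coprime1n (K (L 1%N) 1%N) ?(psi1 Hpsi) ?coprime1n ?mL //.
  by apply: cL; rewrite coprime1n.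
- move=> a b; rewrite /psi' coprimeMl.
  case ca: (coprime a q1); case cb: (coprime b q1) => /=; rewrite ?mul0r ?mulr0 //.
  rewrite -(psi_mul Hpsi); apply: K.
  + by apply: cL; rewrite coprimeMl ca cb.
  + by rewrite coprimeMl !cL.
  + by rewrite (mL (a * b)%N) -[in RHS]modnMm (mL a) (mL b) modnMm.
- move=> n; rewrite /psi'.
  have -> : coprime (n + q1) q1 = coprime n q1 by rewrite /coprime gcdnC gcdnDr gcdnC.
  case: ifP => // c; apply: K; rewrite ?cL ?(mL) ?modnDr //.
  by rewrite /coprime gcdnC gcdnDr gcdnC.
- move=> n; rewrite /psi'; case: ifP => c; split => //.
  + by move=> _; apply: (psi_nz Hpsi); apply: cL.
  + by rewrite eqxx.
- move=> n; rewrite /principal_char /psi'.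
  case c0: (coprime n q0).
    have c1 : coprime n q1 by apply: coprime_dvdr c0.
    by rewrite c1 mulr1; apply: K; rewrite ?cL ?mL.
  by rewrite mulr0; apply: (psi0 Hpsi); rewrite c0.
Qed.

End D.

Section E.
Variables (R : realType) (q : nat).

Lemma ekm_neg_perm (m n : nat) : (0 < q)%N ->
  ekm_neg R (m + q) n q = ekm_neg R m n q.
Proof.
move=> q0; rewrite /ekm_neg mulnDl natrD mulrDl (mulnC q) (natrM _ n q) mulfK.
  by rewrite opprD e_add e_natN mulr1.
by rewrite pnatr_eq0 -lt0n.
Qed.

Lemma ekm_neg_pern (m n : nat) : (0 < q)%N ->
  ekm_neg R m (n + q) q = ekm_neg R m n q.
Proof.
move=> q0; rewrite /ekm_neg mulnDr natrD mulrDl (natrM _ m q) mulfK.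
  by rewrite opprD e_add e_natN mulr1.
by rewrite pnatr_eq0 -lt0n.
Qed.

Lemma ekm_perm (m n : nat) : (0 < q)%N ->
  ekm R (m + q) n q = ekm R m n q.
Proof.
move=> q0; rewrite /ekm mulnDl natrD mulrDl (mulnC q) (natrM _ n q) mulfK.
  by rewrite e_add e_nat mulr1.
by rewrite pnatr_eq0 -lt0n.
Qed.

Variable f : nat -> R[i].

Lemma Tq_per (m : nat) : (0 < q)%N -> Tq q f (m + q) = Tq q f m.
Proof.
by move=> q0; rewrite /Tq; congr (_ * _); apply: eq_bigr => n _; rewrite ekm_neg_perm.
Qed.

Lemma Tq0 (m : nat) : (0 < q)%N -> periodic_nat q f ->
  Tq q f m = (q%:R)^-1 * \sum_(n < q) ekm_neg R m n q * f n.
Proof.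
move=> q0 pf; rewrite /Tq sum_shift1 // => n.
by rewrite ekm_neg_pern // pf.
Qed.

Lemma Tq_subst (psi : nat -> R[i]) (u m : nat) : (0 < q)%N -> periodic_nat q f ->
  coprime u q -> (forall n, f (u * n)%N = psi u * f n) ->
  Tq q f m = psi u * Tq q f (m * u).
Proof.
move=> q0 pf cu Pf; rewrite !Tq0 // mulrCA; congr (_ * _).
pose F n := ekm_neg R m n q * f n.
have Fper : forall n, F (n + q)%N = F n by move=> n; rewrite /F ekm_neg_pern // pf.
pose h (i : 'I_q) : 'I_q := Ordinal (ltn_pmod (u * i) q0).
have hinj : injective h.
  have tp : (0 < totient q)%N by rewrite totient_gt0.
  set u' := (u ^ (totient q).-1)%N.
  have uu : ((u' * u) %% q = 1 %% q)%N.
    by rewrite /u' mulnC -expnS prednK //; apply: Euler_exp_totient.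
  move=> i j /(congr1 val) /= e.
  apply: val_inj => /=.
  rewrite -(modn_small (ltn_ord i)) -(modn_small (ltn_ord j)).
  rewrite -(mul1n i) -(mul1n j) -modnMml -uu modnMml -mulnA -modnMmr e.
  by rewrite modnMmr mulnA -modnMml uu modnMml.
rewrite (reindex_inj hinj) /= mulr_sumr; apply: eq_bigr => i _.
have := per_mod Fper (u * i); rewrite /F => ->.
rewrite Pf mulrCA; congr (_ * (_ * _)).
by rewrite /ekm_neg mulnA.
Qed.

Lemma Pf_E (psi : nat -> R[i]) q0 : (0 < q)%N -> (q0 %| q)%N -> dirichlet_char q0 psi ->
  in_E q q0 psi f -> forall u n, coprime u q -> f (u * n)%N = psi u * f n.
Proof.
move=> q0p dq0 Hpsi [c Hc] u n cu.
have qq0 : (0 < q %/ q0)%N.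
  by rewrite divn_gt0 ?(dvdn_gt0 q0p dq0) // dvdn_leq.
rewrite !Hc mulr_sumr; apply: eq_big_seq => d dD.
have dq : (d %| q)%N.
  by apply: (dvdn_trans _ (dvdn_div dq0)); rewrite dvdn_divisors.
rewrite mulrCA; congr (_ * _); rewrite /xi.
have cud : coprime d u by rewrite coprime_sym; apply: coprime_dvdr dq cu.
rewrite Gauss_dvdr //; case: ifP => dn; last by rewrite mulr0.
rewrite -muln_divA // /induced_char /principal_char (psi_mul Hpsi) coprimeMl.
have -> : coprime u (q %/ d) by apply: coprime_dvdr (dvdn_div dq) cu.
by rewrite /=; case: ifP; rewrite ?mulr1 ?mulr0 // mulrA.
Qed.

Lemma Tq_b (psi : nat -> R[i]) q0 d k : (0 < q)%N -> (q0 %| q)%N ->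
  dirichlet_char q0 psi -> periodic_nat q f ->
  (forall u n, coprime u q -> f (u * n)%N = psi u * f n) ->
  d \in divisors (q %/ q0) -> coprime k (q %/ d) ->
  Tq q f (d * k) = conjc (psi k) * Tq q f d.
Proof.
move=> q0p dq0 Hpsi pf Pf dD ck.
have qq0 : (0 < q %/ q0)%N.
  by rewrite divn_gt0 ?(dvdn_gt0 q0p dq0) // dvdn_leq.
have dqq0 : (d %| q %/ q0)%N by rewrite dvdn_divisors.
have dq : (d %| q)%N by apply: (dvdn_trans dqq0 (dvdn_div dq0)).
have q0d : (q0 %| q %/ d)%N by rewrite dvdn_divRL // mulnC -dvdn_divRL.
have q0pos : (0 < q0)%N by apply: dvdn_gt0 q0p dq0.
set u := (k + liftT k q * (q %/ d))%N.
have cu : coprime u q by apply: lift_coprime.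
rewrite (@Tq_subst psi u d q0p pf cu (fun n => Pf u n cu)).
have e1 : Tq q f (d * u) = Tq q f (d * k).
  rewrite /u mulnDr mulnCA [(d * (q %/ d))%N]mulnC divnK //.
  have := per_add (fun n => Tq_per n q0p) (d * k) (liftT k q).
  by rewrite [(_ * q)%N]mulnC.
have epu : psi u = psi k.
  apply: (psi_eqmod Hpsi).
  by rewrite /u -(divnK q0d) mulnA addnC modnMDl.
have ckq0 : coprime k q0 by apply: coprime_dvdr q0d ck.
by rewrite e1 epu mulrA (psi_unit Hpsi) // mul1r.
Qed.

Lemma Tq_a (psi : nat -> R[i]) q0 m : (0 < q)%N -> (q0 %| q)%N ->
  primitive_char q0 psi -> periodic_nat q f ->
  (forall u n, coprime u q -> f (u * n)%N = psi u * f n) ->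
  ~~ (gcdn m q %| q %/ q0)%N -> Tq q f m = 0.
Proof.
move=> q0p dq0 Hp pf Pf ndv.
case: (eqVneq (Tq q f m) 0) => // nz; exfalso.
have [Hpsi _] := Hp.
have q0pos : (0 < q0)%N by apply: dvdn_gt0 q0p dq0.
set e := gcdn m q.
have e0 : (0 < e)%N by rewrite gcdn_gt0 q0p orbT.
have eq : (e %| q)%N by apply: dvdn_gcdr.
have em : (e %| m)%N by apply: dvdn_gcdl.
set h := (q %/ e)%N.
have hq : (h * e = q)%N by rewrite divnK.
have h0 : (0 < h)%N by rewrite divn_gt0 // dvdn_leq.
set q1 := gcdn h q0.
have q1h : (q1 %| h)%N by apply: dvdn_gcdl.
have q1q0 : (q1 %| q0)%N by apply: dvdn_gcdr.
have q1p : (0 < q1)%N by rewrite gcdn_gt0 h0.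
have lq : (q1 < q0)%N.
  rewrite ltn_neqAle dvdn_leq // andbT; apply/eqP => e1.
  have q0h : (q0 %| h)%N by rewrite -e1.
  have : (e * q0 %| h * e)%N by rewrite mulnC dvdn_pmul2r.
  by rewrite hq => H; move: ndv; rewrite dvdn_divRL // H.
apply: (prim_contra Hp q1q0 lq).
move=> a ca am.
have q0gt1 : (1 < q0)%N by apply: leq_ltn_trans q1p lq.
have a0 : (0 < a)%N.
  rewrite lt0n; apply/eqP => a0; move: ca; rewrite a0 /coprime gcd0n => /eqP e1.
  by rewrite e1 in q0gt1.
have [s es] : exists s, a = (1 + s * q1)%N.
  have : (q1 %| a - 1)%N by rewrite -eqn_mod_dvd // am.
  by case/dvdnP => s es; exists s; rewrite addnC -es subnK.
set h' := (h %/ q1)%N.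
have hh : (h = h' * q1)%N by rewrite divnK.
set c := (q0 %/ q1)%N.
have cq : (q0 = c * q1)%N by rewrite divnK.
have c0 : (0 < c)%N by rewrite divn_gt0 // dvdn_leq.
have h'0 : (0 < h')%N by rewrite divn_gt0 // dvdn_leq.
have chc : coprime h' c.
  rewrite /coprime -(eqn_pmul2r q1p) mul1n muln_gcdl -hh -cq.
  by apply/eqP.
set phi := totient c.
have phi0 : (0 < phi)%N by rewrite totient_gt0.
set X := (h' ^ phi)%N.
have [r er] : exists r, X = (1 + r * c)%N.
  have X0 : (0 < X)%N by rewrite expn_gt0 h'0.
  have : (c %| X - 1)%N by rewrite -eqn_mod_dvd //; apply/eqP; apply: Euler_exp_totient.
  by case/dvdnP => r er; exists r; rewrite addnC -er subnK.
set u1 := (1 + s * q1 * X)%N.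
have u1a : (u1 = a + (s * r) * q0)%N by rewrite /u1 er es cq; ring.
set t1 := (s * h' ^ phi.-1)%N.
have u1h : (u1 = 1 + t1 * h)%N.
  have XE : (X = h' * h' ^ phi.-1)%N by rewrite /X -expnS prednK.
  by rewrite /u1 XE /t1 hh; ring.
have cu1 : coprime u1 (h * q0).
  rewrite coprimeMr; apply/andP; split.
    by rewrite u1h /coprime gcdnC addnC gcdnMDl gcdn1.
  by rewrite u1a /coprime gcdnC addnC gcdnMDl gcdnC.
set L := liftT u1 q.
set u := (u1 + L * (h * q0))%N.
have cu : coprime u q by apply: lift_coprime.
have Tu := @Tq_subst psi u m q0p pf cu (fun n => Pf u n cu).
have emu : (m * u = m + (m %/ e * (t1 + L * q0)) * q)%N.
  set m' := (m %/ e)%N.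
  have me : (m = m' * e)%N by rewrite divnK.
  rewrite /u u1h -hq {1 2}me; ring.
rewrite emu (per_add (fun n => Tq_per n q0p)) in Tu.
have pu1 : psi u = 1.
  apply: (mulIf nz); by rewrite mul1r -Tu.
rewrite -pu1; apply: (psi_eqmod Hpsi).
have -> : (u = a + (s * r + L * h) * q0)%N by rewrite /u u1a; ring.
by rewrite addnC modnMDl.
Qed.

Lemma prod_e (m j n : nat) : (0 < q)%N -> (j <= q)%N ->
  ekm_neg R m j q * ekm R m n q = expi2pi ((m * (n + (q - j)))%:R / q%:R).
Proof.
move=> q0 jq.
have qn0 : (q%:R : R) != 0 by rewrite pnatr_eq0 -lt0n.
rewrite /ekm_neg /ekm -e_add.
rewrite [X in expi2pi X](_ : _ = (m * (n + (q - j)))%:R / q%:R + - (m%:R)); last first.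
  by rewrite !natrM natrD natrB //; field.
by rewrite e_add e_natN mulr1.
Qed.

Lemma DFT (n : nat) : (0 < q)%N -> periodic_nat q f ->
  f n = \sum_(1 <= m < q.+1) Tq q f m * ekm R m n q.
Proof.
move=> q0 pf.
have qn0 : (q%:R : R) != 0 by rewrite pnatr_eq0 -lt0n.
rewrite sum_shift1; last by move=> m; rewrite Tq_per // ekm_perm.
have E1 : forall j : 'I_q, \sum_(m < q) ekm_neg R m j q * ekm R m n q =
    if (q %| n + (q - j))%N then q%:R else 0.
  move=> j; rewrite -(@geo R q _ q0); apply: eq_bigr => m _.
  by apply: prod_e => //; apply: ltnW.
have Ej : forall j : 'I_q, (q %| n + (q - j))%N = (j == n %% q :> nat)%N.
  move=> j; have jq := ltn_ord j.
  rewrite {1}(divn_eq n q) -addnA dvdn_addr ?dvdn_mull //.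
  have rq : (n %% q < q)%N by rewrite ltn_pmod.
  rewrite addnBA ?(ltnW jq) // -eqn_mod_dvd; last first.
    by apply: leq_trans (ltnW jq) (leq_addl _ _).
  by rewrite modnDr modn_small // (modn_small jq) eq_sym.
rewrite (eq_bigr (fun m : 'I_q => q%:R^-1 *
   \sum_(j < q) f j * (ekm_neg R m j q * ekm R m n q))); last first.
  move=> m _; rewrite Tq0 // -mulrA mulr_suml; congr (_ * _).
  by apply: eq_bigr => j _; rewrite mulrAC mulrC.
rewrite -mulr_sumr exchange_big /=.
rewrite (eq_bigr (fun j : 'I_q => if (j == n %% q :> nat)%N then f j * q%:R else 0));
  last first.
  by move=> j _; rewrite -mulr_sumr E1 Ej; case: ifP; rewrite ?mulr0.
rewrite -big_mkcond /=.
rewrite -(big_mkord (fun j => j == (n %% q)%N) (fun j => f j * q%:R)).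
have qn0C : (q%:R : R[i]) != 0 by rewrite pnatr_eq0 -lt0n.
rewrite big_nat1_eq /= ltn_pmod // mulrCA (mulVf qn0C) mulr1.
by rewrite (per_mod pf).
Qed.

End E.

Section F.
Variable R : realType.

Lemma ekm_shift (k n M d : nat) : (0 < d)%N ->
  ekm R (d * k) n (M * d) = ekm R k n M.
Proof.
move=> d0; rewrite /ekm -mulnA (mulnC d) natrM (natrM _ M d) -mulf_div divff ?mulr1 //.
by rewrite pnatr_eq0 -lt0n.
Qed.

Lemma gcd_char (m q d : nat) : (0 < d)%N -> (d %| q)%N ->
  (gcdn m q == d) = (d %| m)%N && coprime (m %/ d) (q %/ d).
Proof.
move=> d0 dq; case dm: (d %| m)%N => /=.
  have -> : gcdn m q = (gcdn (m %/ d) (q %/ d) * d)%N by rewrite muln_gcdl !divnK.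
  by rewrite /coprime -[X in _ == X](mul1n d) eqn_pmul2r.
apply/negP => /eqP e.
by rewrite -e dvdn_gcdl in dm.
Qed.

Lemma sum_ind (T : eqType) (V : nmodType) (s : seq T) (x : T) (F : V) :
  uniq s -> \sum_(d <- s) (if x == d then F else 0) = if x \in s then F else 0.
Proof.
elim: s => [|a s IH] /=; first by rewrite big_nil.
move=> /andP[na us]; rewrite big_cons IH // in_cons.
case: (eqVneq x a) => [ea|ne] /=.
  by rewrite -ea in na; rewrite (negbTE na) addr0.
by rewrite add0r.
Qed.

End F.

Unset Implicit Arguments.

Theorem lemma4p1 (R : realType) (q q0 : nat) (psi : nat -> R[i]) (f : nat -> R[i]) :
  (0 < q)%N -> (q0 %| q)%N ->
  primitive_char q0 psi ->
  periodic_nat q f ->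
  in_E q q0 psi f ->
  forall n : nat, (0 < n)%N ->
    f n = \sum_(d <- divisors (q %/ q0))
            Tq q f d * gauss_sum (q %/ d) n (conj_fun (induced_char psi (q %/ d))).
Proof.
move=> q0p dq0 Hp pf HE n n0.
have [Hpsi _] := Hp.
have Pf := @Pf_E R q f psi q0 q0p dq0 Hpsi HE.
have q0pos : (0 < q0)%N by apply: dvdn_gt0 q0p dq0.
have qq0 : (0 < q %/ q0)%N by rewrite divn_gt0 // dvdn_leq.
have cj0 : conjc (0 : R[i]) = 0 by apply/eqP; rewrite eq_complex /= oppr0 !eqxx.
have step : forall d, d \in divisors (q %/ q0) ->
    Tq q f d * gauss_sum (q %/ d) n (conj_fun (induced_char psi (q %/ d))) =
    \sum_(1 <= m < q.+1) (if gcdn m q == d then Tq q f m * ekm R m n q else 0).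
  move=> d dD.
  have dqq0 : (d %| q %/ q0)%N by rewrite dvdn_divisors.
  have dq : (d %| q)%N by apply: (dvdn_trans dqq0 (dvdn_div dq0)).
  have d0 : (0 < d)%N by apply: dvdn_gt0 qq0 dqq0.
  have qe : q = (d * (q %/ d))%N by rewrite mulnC divnK.
  pose G' m := if coprime (m %/ d) (q %/ d) then Tq q f m * ekm R m n q else 0.
  have SM := sum_mult G' (q %/ d) d0.
  rewrite -qe in SM.
  rewrite (eq_bigr (fun m => if (d %| m)%N then G' m else 0)); last first.
    by move=> m _; rewrite gcd_char // /G'; case: (d %| m)%N.
  rewrite SM /gauss_sum mulr_sumr; apply: eq_bigr => k _.
  rewrite /G' mulKn // /conj_fun /induced_char /principal_char.
  case: ifP => ck; last by rewrite mulr0 cj0 mul0r mulr0.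
  rewrite mulr1 mulrA [Tq q f d * _]mulrC -(Tq_b q0p dq0 Hpsi pf Pf dD ck).
  by rewrite -(ekm_shift R k n (q %/ d) d0) divnK.
rewrite (eq_big_seq _ step) exchange_big /=.
rewrite (DFT n q0p pf); apply: eq_bigr => m _.
rewrite sum_ind ?divisors_uniq //.
case: ifP => // nD.
rewrite -dvdn_divisors // in nD.
by rewrite (Tq_a q0p dq0 Hp pf Pf) ?nD // mul0r.
Qed.
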